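(* Let $k,m,n$ be positive integers with $m\le n(n+1)/2$. Let $\mathcal{C}$ be any algorithm that, given an $m\times n$ matrix $A$ whose entries are $O(k)$-bit integers, produces a data structure (bit string) $\mathcal{C}(A)$ from which, independently of $A$, the value $\mu_A(J)$ can be evaluated for every $J\in\mathbb{I}_n$. Then $\mathcal{C}(A)$ needs $\Omega(km)$ bits of space (i.e. in the worst case over such matrices $A$, $\mathcal{C}(A)$ has at least $c\,km$ bits for an absolute constant $c>0$).
   Context: For integers $i\le j$, $[i:j]=\{i,\dots,j\}$; $\mathbb{I}_n=\{[i:j]:1\le i\le j\le n\}$. For a matrix $A=[a_{ij}]$ with $n$ columns, $\mu_A:\mathbb{I}_n\to\mathbb{R}$ is $\mu_A(J)=\max_{k'\ge1}\sum_{i=1}^{k'}\sum_{j\in J}a_{ij}$, the maximum over row indices $k'$. *)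

(* Defs.v *)
From HB Require Import structures.
From mathcomp Require Import all_boot all_order all_algebra.
Set Implicit Arguments. Unset Strict Implicit. Unset Printing Implicit Defensive.
Import Order.TTheory GRing.Theory Num.Theory.
Local Open Scope ring_scope.

(* Columns/rows are 0-based ordinals: paper's column c+1 is our c : 'I_n,
   and paper's row index k' (1-based) corresponds to rows r < k'. *)

Definition colsum (m n : nat) (A : 'M[int]_(m, n)) (i j : nat) (r : 'I_m) : int :=
  \sum_(c : 'I_n | (i <= c <= j)%N) A r c.

Definition prefix (m n : nat) (A : 'M[int]_(m, n)) (i j K : nat) : int :=
  \sum_(r : 'I_m | (r < K)%N) colsum A i j r.

Definition mu (m n : nat) (A : 'M[int]_(m, n)) (i j : nat) : int :=
  \big[Num.max/prefix A i j 1]_(1 <= K < m.+1) prefix A i j K.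

Definition bounded_bits (m n : nat) (b : nat) (A : 'M[int]_(m, n)) : Prop :=
  forall (r : 'I_m) (c : 'I_n), (absz (A r c) < 2 ^ b)%N.

(* Main.v *)
Require Import Defs.
From mathcomp Require Import all_boot all_order all_algebra zify.
Import Order.TTheory GRing.Theory Num.Theory.

Lemma nseq_true_inj a a' (w w' : seq bool) :
  nseq a false ++ true :: w = nseq a' false ++ true :: w' -> w = w'.
Proof.
elim: a a' => [|a IH] [|a'] //=; [by case | by case=> /IH].
Qed.

Definition pad (N : nat) (s : seq bool) := s ++ true :: nseq (N - (size s).+1) false.

Lemma pad_inj N s s' : pad N s = pad N s' -> s = s'.
Proof.
rewrite /pad => /(congr1 (@rev bool)); rewrite !rev_cat !rev_cons !rev_nseq.
rewrite -!cats1 -!catA /= => /nseq_true_inj.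
by move/(congr1 (@rev bool)); rewrite !revK.
Qed.

Lemma counting (T : finType) (f : T -> seq bool) N :
  injective f -> #|T| = 2 ^ N -> exists t, (N <= size (f t))%N.
Proof.
move=> finj hT.
case: (boolP [exists t, N <= size (f t)]) => [/existsP [t ht]|]; first by exists t.
rewrite negb_exists => /forallP hall.
have hs t : (size (f t) < N)%N by rewrite ltnNge; apply: hall.
have hsz t : size (pad N (f t)) == N.
  by rewrite /pad size_cat /= size_nseq; have := hs t; lia.
pose g t : N.-tuple bool := Tuple (hsz t).
have ginj : injective g.
  by move=> t1 t2 /(congr1 val) /= /pad_inj /finj.
have hsub : [set g t | t in T] \proper [set: N.-tuple bool].
  apply/properP; split; first exact: subsetT.
  exists [tuple of nseq N false]; first by rewrite inE.
  apply/imsetP => -[t _ /(congr1 val) /= E].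
  have : true \in pad N (f t) by rewrite /pad mem_cat in_cons eqxx orbT.
  by rewrite -E mem_nseq andbF.
have := proper_card hsub.
by rewrite card_imset // cardsT card_tuple card_bool hT ltnn.
Qed.
Local Open Scope ring_scope.

Lemma sum_ord_interval (n i j : nat) (F : nat -> int) : (j < n)%N -> (i <= j.+1)%N ->
  \sum_(c : 'I_n | (i <= c <= j)%N) F c = \sum_(i <= c < j.+1) F c.
Proof.
move=> hjn hij.
rewrite -(big_mkord (fun c => (i <= c <= j)%N)).
rewrite [RHS](big_nat_widen _ _ n) //.
rewrite (@big_cat_nat _ _ _ i 0 n) /= ?(leq_trans hij hjn) //.
rewrite big_nat_cond big1 ?add0r; last first.
  move=> c /andP[/andP[_ h1] /andP[h2 _]]. by rewrite leqNgt h1 in h2.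
rewrite [RHS]big_nat_cond [LHS]big_nat_cond.
apply: eq_bigl => c. rewrite ltnS. by case: (i <= c)%N; case: (c <= j)%N; rewrite ?andbT ?andbF.
Qed.

Definition Pf (p a b t : nat) : int :=
  if (t < p)%N then (if (t < a)%N then 2 else if t == a then 0 else -2)
  else (if (t < b)%N then -1 else if t == b then 0 else 1).

Definition Qf (M p a b x t : nat) : int :=
  M%:Z * Pf p a b t + (if (a < t)%N then x%:Z else 0).

Lemma Q_lt M p a t a' t' x : (x < M)%N -> (a < p)%N -> (a' < p)%N ->
  (a < a')%N \/ (a = a' /\ (t < t')%N) ->
  0 <= Qf M p a (p + t) x (p + t') - Qf M p a (p + t) x a'.
Proof.
move=> hx ha ha' H; rewrite /Qf /Pf.
repeat case: ifP => ? ; lia.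
Qed.

Lemma Q_gt M p a t a' t' x : (x < M)%N -> (a < p)%N -> (a' < p)%N ->
  (a' < a)%N \/ (a = a' /\ (t' < t)%N) ->
  Qf M p a (p + t) x (p + t') - Qf M p a (p + t) x a' <= 0.
Proof.
move=> hx ha ha' H; rewrite /Qf /Pf.
repeat case: ifP => ? ; lia.
Qed.

Lemma Q_eq M p a t x : (a < p)%N ->
  Qf M p a (p + t) x (p + t) - Qf M p a (p + t) x a = x%:Z.
Proof.
move=> ha; rewrite /Qf /Pf.
repeat case: ifP => ? ; lia.
Qed.

Lemma Q_step M p a b x t : (x < M)%N ->
  (absz (Qf M p a b x t.+1 - Qf M p a b x t) < 8 * M)%N.
Proof.
move=> hx; rewrite /Qf /Pf.
repeat case: ifP => ? ; lia.
Qed.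

Lemma lexdiv {q s r : nat} : (0 < q)%N -> (s < r)%N ->
  (s %/ q < r %/ q)%N \/ (s %/ q = r %/ q /\ s %% q < r %% q)%N.
Proof.
move=> hq hsr.
have : (s %/ q <= r %/ q)%N by apply: leq_div2r; apply: ltnW.
rewrite leq_eqVlt => /orP [/eqP E|]; last by left.
right; split => //.
have e1 := div.divn_eq s q; have e2 := div.divn_eq r q.
rewrite E in e1. lia.
Qed.

Lemma bigmax_ub (r : seq nat) (F : nat -> int) idx y : y \in r ->
  F y <= \big[Num.max/idx]_(z <- r) F z.
Proof.
elim: r => [|z r IH] //; rewrite big_cons in_cons => /orP [/eqP ->|/IH h].
  by rewrite le_max lexx.
by rewrite le_max h orbT.
Qed.

Lemma bigmax_lub (r : seq nat) (F : nat -> int) idx v : idx <= v ->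
  (forall y, y \in r -> F y <= v) -> \big[Num.max/idx]_(z <- r) F z <= v.
Proof.
move=> hi; elim: r => [|z r IH] H; first by rewrite big_nil.
rewrite big_cons ge_max H ?mem_head //= IH // => y hy; apply: H; by rewrite in_cons hy orbT.
Qed.

Definition pp n := (n.+1 %/ 2)%N.
Definition qq n := (n.+1 - pp n)%N.
Definition uu m n := minn m (pp n * qq n).
Definition aa n s := (s %/ qq n)%N.
Definition bb n s := (pp n + s %% qq n)%N.

Definition entry k m n (xs : seq nat) (s c : nat) : int :=
  if (s < uu m n)%N then
    Qf (2^k)%N (pp n) (aa n s) (bb n s) (nth 0%N xs s) c.+1
    - Qf (2^k)%N (pp n) (aa n s) (bb n s) (nth 0%N xs s) c
  else 0.

Definition Amat k m n xs : 'M[int]_(m, n) := \matrix_(s, c) entry k m n xs s c.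

Definition cval k m n (xs : seq nat) (r s : nat) : int :=
  if (s < uu m n)%N then
    Qf (2^k)%N (pp n) (aa n s) (bb n s) (nth 0%N xs s) (bb n r)
    - Qf (2^k)%N (pp n) (aa n s) (bb n s) (nth 0%N xs s) (aa n r)
  else 0.

Lemma basics m n r : (0 < n)%N -> (r < uu m n)%N ->
  [/\ (0 < pp n)%N, (0 < qq n)%N, (pp n + qq n = n.+1)%N,
      (aa n r < pp n)%N & (r %% qq n < qq n)%N].
Proof.
move=> hn hr.
have hp : (0 < pp n)%N by rewrite /pp; lia.
have hq : (0 < qq n)%N by rewrite /qq /pp; lia.
split => //; first by rewrite /qq /pp; lia.
  rewrite /aa ltn_divLR //; move: hr; rewrite /uu; lia.
by rewrite ltn_mod.
Qed.
Arguments basics {m n r}.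

Lemma colsumE k m n xs r (s : 'I_m) : (0 < n)%N -> (r < uu m n)%N ->
  colsum (Amat k m n xs) (aa n r) (bb n r).-1 s = cval k m n xs r s.
Proof.
move=> hn hr; have [hp hq hpq har hrq] := basics hn hr.
rewrite /colsum.
under eq_bigr => c _ do rewrite mxE.
rewrite sum_ord_interval; last by rewrite /bb; lia.
  rewrite prednK; last by rewrite /bb; lia.
  rewrite /entry /cval; case: ifP => hs.
    rewrite (telescope_sumr (fun c => Qf (2^k)%N (pp n) (aa n s) (bb n s) (nth 0%N xs s) c)) //.
    by rewrite /bb; lia.
  by rewrite big1.
by rewrite /bb; lia.
Qed.

Lemma sum_ord_lt m K (F : nat -> int) : (K <= m)%N ->
  \sum_(s : 'I_m | (s < K)%N) F s = \sum_(0 <= s < K) F s.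
Proof.
move=> hK; rewrite -(big_mkord (fun s => (s < K)%N)).
by rewrite [RHS](big_nat_widen _ _ m).
Qed.

Lemma prefixE k m n xs r K : (0 < n)%N -> (r < uu m n)%N -> (K <= m)%N ->
  Defs.prefix (Amat k m n xs) (aa n r) (bb n r).-1 K = \sum_(0 <= s < K) cval k m n xs r s.
Proof.
move=> hn hr hK; rewrite /Defs.prefix.
under eq_bigr => s _ do rewrite colsumE //.
exact: sum_ord_lt.
Qed.

Lemma cval_ge0 k m n xs r s : (0 < n)%N -> (r < uu m n)%N ->
  (forall s, nth 0%N xs s < 2 ^ k)%N -> (s <= r)%N -> 0 <= cval k m n xs r s.
Proof.
move=> hn hr hx hsr; rewrite /cval; case: ifP => hs //.
have [hp hq hpq har hrq] := basics hn hr.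
have [_ _ _ has hsq] := basics hn hs.
rewrite /bb.
move: hsr; rewrite leq_eqVlt => /orP [/eqP E|hsr].
  subst s; rewrite Q_eq //.
apply: Q_lt; [exact: hx|done|done|rewrite /aa; exact: (lexdiv hq hsr)].
Qed.

Lemma cval_le0 k m n xs r s : (0 < n)%N -> (r < uu m n)%N ->
  (forall s, nth 0%N xs s < 2 ^ k)%N -> (r < s)%N -> cval k m n xs r s <= 0.
Proof.
move=> hn hr hx hsr; rewrite /cval; case: ifP => hs //.
have [hp hq hpq har hrq] := basics hn hr.
have [_ _ _ has hsq] := basics hn hs.
rewrite /bb.
apply: Q_gt; [exact: hx|done|done|rewrite /aa; case: (lexdiv hq hsr) => [h|[h1 h2]]; [by left|by right]].
Qed.

Lemma cval_eq k m n xs r : (0 < n)%N -> (r < uu m n)%N ->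
  cval k m n xs r r = (nth 0%N xs r)%:Z.
Proof.
move=> hn hr; have [hp hq hpq har hrq] := basics hn hr.
by rewrite /cval hr /bb Q_eq.
Qed.

Lemma pref_le k m n xs r K : (0 < n)%N -> (r < uu m n)%N ->
  (forall s, nth 0%N xs s < 2 ^ k)%N ->
  \sum_(0 <= s < K) cval k m n xs r s <= \sum_(0 <= s < r.+1) cval k m n xs r s.
Proof.
move=> hn hr hx.
case: (leqP K r.+1) => hK.
  rewrite [X in _ <= X](@big_cat_nat _ _ _ K 0 r.+1) //= lerDl.
  rewrite big_nat_cond; apply: sumr_ge0 => s /andP[/andP[_ h] _].
  by apply: cval_ge0.
rewrite (@big_cat_nat _ _ _ r.+1 0 K) //=; last exact: ltnW.
rewrite gerDl big_nat_cond; apply: sumr_le0 => s /andP[/andP[h _] _].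
by apply: cval_le0.
Qed.

Lemma muE k m n xs r : (0 < n)%N -> (r < uu m n)%N ->
  (forall s, nth 0%N xs s < 2 ^ k)%N ->
  mu (Amat k m n xs) (aa n r) (bb n r).-1 = \sum_(0 <= s < r.+1) cval k m n xs r s.
Proof.
move=> hn hr hx.
have hrm : (r < m)%N by move: hr; rewrite /uu; lia.
rewrite /mu; apply/eqP; rewrite eq_le; apply/andP; split.
  apply: bigmax_lub.
    by rewrite prefixE //; [apply: pref_le | lia].
  move=> y; rewrite mem_index_iota => /andP[_ hy].
  by rewrite prefixE //; apply: pref_le.
rewrite -prefixE //.
apply: bigmax_ub.
by rewrite mem_index_iota; lia.
Qed.

Lemma nth_ord_lt N (t : seq 'I_N) s : (0 < N)%N -> (nth 0%N (map val t) s < N)%N.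
Proof.
move=> hN; elim: t s => [|x t IH] [|s] //=; by rewrite nth_nil.
Qed.

Theorem lemma6p6 :
  exists (C d : nat), (0 < C)%N /\ (0 < d)%N /\
  forall (k m n : nat), (0 < k)%N -> (0 < m)%N -> (0 < n)%N ->
    (m <= n * n.+1 %/ 2)%N ->
    forall (enc : 'M[int]_(m, n) -> seq bool)
           (dec : seq bool -> 'I_n -> 'I_n -> int),
      (forall A : 'M[int]_(m, n), bounded_bits (C * k) A ->
         forall i j : 'I_n, (i <= j)%N -> dec (enc A) i j = mu A i j) ->
      exists A : 'M[int]_(m, n),
        bounded_bits (C * k) A /\ (k * m <= d * size (enc A))%N.
Proof.
exists 4%N, 2%N; split => //; split => //.
move=> k m n hk hm hn hmn enc dec hdec.
have h2k : (0 < 2 ^ k)%N by rewrite expn_gt0.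
have hm2 : (m <= 2 * uu m n)%N.
  have : (m <= 2 * (pp n) * (qq n))%N by move: hmn; clear; rewrite /qq /pp; nia.
  rewrite -mulnA.
  rewrite /uu; move: (pp n * qq n)%N => P; lia.
pose Af (t : (uu m n).-tuple 'I_(2 ^ k)) := Amat k m n (map val t).
have hx t : forall s, (nth 0%N (map val (t : seq 'I_(2 ^ k))) s < 2 ^ k)%N.
  by move=> s; apply: nth_ord_lt.
have hb t : bounded_bits (4 * k) (Af t).
  move=> s c; rewrite mxE /entry; case: ifP => _; last by rewrite expn_gt0.
  apply: leq_trans (Q_step _ _ _ _ _ _ (hx t s)) _.
  have -> : (8 = 2 ^ 3)%N by [].
  by rewrite -expnD leq_exp2l //; lia.
have inj : injective (fun t => enc (Af t)).
  move=> t1 t2 /= E.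
  have Hmu (i j : 'I_n) : (i <= j)%N -> mu (Af t1) i j = mu (Af t2) i j.
    by move=> hij; rewrite -!hdec // E.
  apply: val_inj; apply: (inj_map val_inj).
  apply: (eq_from_nth (x0 := 0%N)); first by rewrite !size_map !size_tuple.
  rewrite size_map size_tuple.
  elim/ltn_ind => r IH hr.
  have [hp hq hpq har hrq] := basics hn hr.
  have hi : (aa n r < n)%N by lia.
  have hj : ((bb n r).-1 < n)%N by rewrite /bb; lia.
  have := Hmu (Ordinal hi) (Ordinal hj).
  rewrite /= /Af (muE _ _ _ _ _ hn hr (hx t1)) (muE _ _ _ _ _ hn hr (hx t2)).
  move=> H; have {H} := H ltac:(rewrite /bb; lia).
  rewrite !big_nat_recr //= !cval_eq // => /eqP.
  rewrite (@eq_big_nat _ _ _ 0 r _ (cval k m n (map val t2) r)).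
    by move=> /eqP /addrI [->].
  move=> s /andP[_ hs]; rewrite /cval (IH s hs) //; exact: ltn_trans hs hr.
have hcard : #|{: (uu m n).-tuple 'I_(2 ^ k)}| = (2 ^ (k * uu m n))%N.
  by rewrite card_tuple card_ord expnM.
have [t ht] := counting _ _ _ inj hcard.
exists (Af t); split; first exact: hb.
move: ht hm2; nia.
Qed.
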